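(* Let $(a_n)_{n\ge0}$ be a sequence of positive real numbers, and set $u_n=\frac{a_{2n-1}}{a_{2n}}$ and $v_n=\frac{2na_{2n}}{(2n+1)a_{2n+1}}$ for $n\ge1$. Suppose (i) $(u_n)$ and $(v_n)$ are decreasing in $n$; (ii) $\sum_{i=1}^n a_{2i-1}u_n^{2i-1}<a_0$ for all $n\ge1$; (iii) $\sum_{i=1}^n 2ia_{2i}v_n^{2i-1}<a_1$ for all $n\ge1$. Then for every $m\ge0$ the polynomial $\sum_{i=0}^m a_ix^i$ has no real root if $m$ is even and exactly one real root (counted with multiplicity) if $m$ is odd. *)

(* Defs.v *)
From mathcomp Require Import all_boot all_order all_algebra.
Set Implicit Arguments. Unset Strict Implicit. Unset Printing Implicit Defensive.
Import Order.TTheory GRing.Theory Num.Theory.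
Local Open Scope ring_scope.

Definition useq (R : realFieldType) (a : nat -> R) (n : nat) : R :=
  a (2 * n - 1)%N / a (2 * n)%N.
Definition vseq (R : realFieldType) (a : nat -> R) (n : nat) : R :=
  ((2 * n)%:R * a (2 * n)%N) / ((2 * n + 1)%:R * a (2 * n + 1)%N).
Definition trunc_poly (R : realFieldType) (a : nat -> R) (m : nat) : {poly R} :=
  \poly_(i < m.+1) a i.

(* Main.v *)
Require Import Defs.
From mathcomp Require Import all_boot all_order all_algebra.
From mathcomp Require Import ring lra zify polyrcf.
Import Order.TTheory GRing.Theory Num.Theory.
Local Open Scope ring_scope.


Lemma key (R : realFieldType) (b : nat -> R) (bpos : forall n, 0 < b n)
  (H : forall k, \sum_(i < k.+1) b (2*i+1)%N * (b (2*k+1)%N / b (2*k+2)%N) ^+ (2*i+1) < b 0%N) :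
  forall n x, - b 0%N < \sum_(i < n) (b (2*i+1)%N * x ^+ (2*i+1) + b (2*i+2)%N * x ^+ (2*i+2)).
Proof.
move=> n x; elim: n => [|n IH]; first by rewrite big_ord0 oppr_lt0.
set c := b (2*n+1)%N * x ^+ (2*n+1) + b (2*n+2)%N * x ^+ (2*n+2).
have [hc|hc] := lerP 0 c.
  by rewrite big_ord_recr /=; apply: ltr_wpDr.
have hx : x < 0.
  rewrite ltNge; apply/negP => hx; move: hc; rewrite ltNge => /negP; apply.
  by rewrite addr_ge0 // mulr_ge0 ?exprn_ge0 // ltW.
set w := b (2*n+1)%N / b (2*n+2)%N.
have ht : - x < w.
  rewrite /w ltr_pdivlMr //.
  have hxo : x ^+ (2*n+1) < 0 by rewrite exprn_odd_lt0 // oddD oddM.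
  have e : c = x ^+ (2*n+1) * (b (2*n+1)%N + b (2*n+2)%N * x).
    rewrite /c (_ : x ^+ (2*n+2) = x ^+ (2*n+1) * x); last by rewrite -exprSr addn1 addn2.
    ring.
  move: hc; rewrite e nmulr_rlt0 // => h; nra.
have hw : 0 <= w by rewrite ltW // divr_gt0.
apply: (lt_le_trans _ (y := \sum_(i < n.+1) - (b (2*i+1)%N * w ^+ (2*i+1)))).
  by rewrite sumrN ltrN2 H.
apply: ler_sum => i _.
rewrite -[X in X <= _]addr0; apply: lerD; last first.
  by apply: mulr_ge0; [exact: ltW|rewrite exprn_even_ge0 // oddD oddM].
rewrite -mulrN ler_pM2l // -[x]opprK exprNn -signr_odd oddD oddM /= expr1 mulN1r lerN2.
apply: lerXn2r; [by rewrite nnegrE oppr_ge0 ltW|by rewrite nnegrE|exact: ltW].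
Qed.

Lemma split_sum (R : realFieldType) (b : nat -> R) n x :
  \sum_(i < (2*n).+1) b i * x ^+ i =
  b 0%N + \sum_(i < n) (b (2*i+1)%N * x ^+ (2*i+1) + b (2*i+2)%N * x ^+ (2*i+2)).
Proof.
elim: n => [|n IH]; first by rewrite big_ord1 big_ord0 expr0 mulr1 addr0.
rewrite (_ : (2*n.+1).+1 = ((2*n).+1).+2)%N; last by rewrite mulnS.
rewrite [in RHS]big_ord_recr /= big_ord_recr /= big_ord_recr /= IH !addn1 !addn2 /=; ring.
Qed.

Lemma pos_eval (R : realFieldType) (b : nat -> R) (bpos : forall n, 0 < b n)
  (H : forall k, \sum_(i < k.+1) b (2*i+1)%N * (b (2*k+1)%N / b (2*k+2)%N) ^+ (2*i+1) < b 0%N)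
  n x : 0 < \sum_(i < (2*n).+1) b i * x ^+ i.
Proof. rewrite split_sum; have := @key _ b bpos H n x; lra. Qed.

Theorem mainTheorem13 (R : rcfType) (a : nat -> R)
  (apos : forall n, 0 < a n)
  (udec : forall n, (1 <= n)%N -> useq a n.+1 <= useq a n)
  (vdec : forall n, (1 <= n)%N -> vseq a n.+1 <= vseq a n)
  (hii : forall n, (1 <= n)%N ->
     \sum_(1 <= i < n.+1) a (2 * i - 1)%N * useq a n ^+ (2 * i - 1) < a 0%N)
  (hiii : forall n, (1 <= n)%N ->
     \sum_(1 <= i < n.+1) (2 * i)%:R * a (2 * i)%N * vseq a n ^+ (2 * i - 1) < a 1%N) :
  forall m : nat,
    (~~ odd m -> forall x : R, ~~ root (trunc_poly a m) x) /\
    (odd m -> exists x : R, [/\ root (trunc_poly a m) x,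
                                mup x (trunc_poly a m) = 1%N &
                                forall y : R, root (trunc_poly a m) y -> y = x]).
Proof.
have Ha : forall k, \sum_(i < k.+1) a (2*i+1)%N * (a (2*k+1)%N / a (2*k+2)%N) ^+ (2*i+1) < a 0%N.
  move=> k; have := hii k.+1 isT; rewrite big_add1 /= big_mkord.
  have -> : useq a k.+1 = a (2*k+1)%N / a (2*k+2)%N.
    rewrite /useq (_ : (2 * k.+1 - 1 = 2*k+1)%N); last by lia.
    by rewrite (_ : (2 * k.+1 = 2*k+2)%N) //; lia.
  congr (_ < _); apply: eq_bigr => i _.
  by rewrite (_ : (2 * i.+1 - 1 = 2*i+1)%N) //; lia.
pose b j := (j.+1)%:R * a j.+1.
have bpos : forall j, 0 < b j by move=> j; rewrite /b mulr_gt0 // ltr0n.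
have Hb : forall k, \sum_(i < k.+1) b (2*i+1)%N * (b (2*k+1)%N / b (2*k+2)%N) ^+ (2*i+1) < b 0%N.
  move=> k; have := hiii k.+1 isT; rewrite big_add1 /= big_mkord.
  have -> : vseq a k.+1 = b (2*k+1)%N / b (2*k+2)%N.
    rewrite /vseq /b (_ : (2 * k.+1 = (2*k+1).+1)%N); last by lia.
    by rewrite (_ : ((2*k+1).+1 + 1 = (2*k+2).+1)%N) //; lia.
  rewrite /b mul1r; congr (_ < _).
  apply: eq_bigr => i _.
  rewrite (_ : (2 * i.+1 - 1 = 2*i+1)%N); last by lia.
  by rewrite (_ : (2 * i.+1 = (2*i+1).+1)%N) //; lia.
move=> m; split.
  move=> hm x; rewrite -[m]odd_double_half (negbTE hm) add0n -mul2n.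
  by rewrite rootE /trunc_poly horner_poly gt_eqF // pos_eval.
move=> hm; rewrite -[m]odd_double_half hm add1n -mul2n.
set n := m./2; set p := trunc_poly a (2*n).+1.
have hd : p^`() = \poly_(i < (2*n).+1) b i.
  apply/polyP => i; rewrite coef_deriv !coef_poly ltnS.
  by case: ifP => _; rewrite ?mul0rn // /b mulr_natl.
have dpos : forall y, 0 < p^`().[y] by move=> y; rewrite hd horner_poly pos_eval.
have sz : size p = (2*n).+2 by rewrite size_poly_eq //= gt_eqF.
have /odd_poly_root [x rx] : ~~ odd (size p) by rewrite sz /= negbK oddM.
exists x; split => //.
  have [q pq] := factor_theorem _ _ rx.
  have qx : ~~ root q x.
    have := dpos x; rewrite pq derivM derivXsubC mulr1 hornerD hornerM hornerXsubC subrr mulr0 add0r.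
    by rewrite rootE => /gt_eqF ->.
  by rewrite pq mupMr // -['X - x%:P]expr1 mup_XsubCX eqxx.
move=> y ry; have := dpos; case: (ltgtP x y) => // hxy dp.
  have [c _ e] := poly_mvt p hxy; move: e; rewrite (rootP rx) (rootP ry) subrr => /esym/eqP.
  by rewrite mulf_eq0 gt_eqF ?dp //= subr_eq0 gt_eqF.
have [c _ e] := poly_mvt p hxy; move: e; rewrite (rootP rx) (rootP ry) subrr => /esym/eqP.
by rewrite mulf_eq0 gt_eqF ?dp //= subr_eq0 gt_eqF.
Qed.
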